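(* For every bi-separated graph with distinguished subsets $\dot E=(E,(C,S),(D,T))$, the natural $K$-algebra homomorphism from the path algebra $K(E)$ to $\mathcal A_K(\dot E)$ (sending each vertex and edge to its class) is injective.
   Context: $K$ is a field. A graph $E=(E^0,E^1,r,s)$; its path algebra $K(E)$ is the free $K$-algebra on $E^0\cup E^1$ modulo $vw=\delta_{vw}v$ and $s(e)e=e=er(e)$. A bi-separated graph with distinguished subsets is $\dot E=(E,(C,S),(D,T))$ where $C=\bigsqcup_v C_v$, $C_v$ a partition of $s^{-1}(v)$ into nonempty sets for each non-sink $v$; $D=\bigsqcup_v D_v$, $D_v$ a partition of $r^{-1}(v)$ for each non-source $v$; $|X\cap Y|\le1$ for $X\in C,Y\in D$; $S\subseteq C_{\rm fin}=\{X\in C:|X|<\infty\}$, $T\subseteq D_{\rm fin}=\{Y\in D:|Y|<\infty\}$. For $X\in C$, $s(X)$ is the common source of its edges; for $Y\in D$, $r(Y)$ the common range; $XY=YX$ is the unique edge of $X\cap Y$ if nonempty, else $0$. The double graph $\widehat E$ adds edges $e^*$ with $s(e^* )=r(e)$, $r(e^* )=s(e)$, and $K(\widehat E)$ is its path algebra. The Cohn–Leavitt path algebra $\mathcal A_K(\dot E)$ is the quotient of $K(\widehat E)$ by: for all $X,X'\in S$, $\sum_{Y\in D}(XY)(YX')^*=\delta_{X,X'}s(X)$; for all $Y,Y'\in T$, $\sum_{X\in C}(YX)^*(XY')=\delta_{Y,Y'}r(Y)$ (with $0^*=0$). *)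

(* Defs.v *)
(* Free (unital) associative K-algebras are modelled concretely:
   an element is a finite formal K-linear combination of words over the generators,
   represented by a list of (coefficient, word) pairs; two lists denote the same
   element iff all word-coefficients agree. *)
From HB Require Import structures.
From mathcomp Require Import all_boot all_order all_algebra.
Set Implicit Arguments. Unset Strict Implicit. Unset Printing Implicit Defensive.
Import GRing.Theory.
Local Open Scope ring_scope.

Section FreeAlg.
Variable K : fieldType.
Variable G : eqType.

Definition fpoly := seq (K * seq G).

Definition fcoef (p : fpoly) (w : seq G) : K := \sum_(x <- p | x.2 == w) x.1.

Definition fsandwich (c : K) (a : seq G) (p : fpoly) (b : seq G) : fpoly :=
  [seq (c * x.1, a ++ x.2 ++ b) | x <- p].

(* f lies in the two-sided ideal of the free algebra K<A> generated by the
   elements satisfying R, where A (a predicate on G) is the generator set: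
   f = sum_i c_i a_i r_i b_i with a_i, b_i words in A and R r_i. *)
Definition in_ideal (A : pred G) (R : fpoly -> Prop) (f : fpoly) : Prop :=
  exists l : seq (K * seq G * fpoly * seq G),
    (forall t, t \in l -> [/\ R t.1.2, all A t.1.1.2 & all A t.2]) /\
    forall w, fcoef f w = fcoef (flatten [seq fsandwich t.1.1.1 t.1.1.2 t.1.2 t.2 | t <- l]) w.
End FreeAlg.

Section Graph.
Variables (K : fieldType) (V Ed : eqType) (s r : Ed -> V).

(* generators of the double graph: vertices, edges e, ghost edges e^* *)
Definition gen := (V + (Ed + Ed))%type.
Definition gv (v : V) : gen := inl v.
Definition ge (e : Ed) : gen := inr (inl e).
Definition gs (e : Ed) : gen := inr (inr e).
Definition nonghost (g : gen) : bool := if g is inr (inr _) then false else true.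

(* defining relations of the path algebra K(E) (ghosts = false) or of K(hat E)
   (ghosts = true), written as elements that must vanish *)
Definition path_rel (ghosts : bool) (p : fpoly K gen) : Prop :=
  (exists v w : V, p = (1, [:: gv v; gv w]) :: (if v == w then [:: (-1, [:: gv v])] else [::]))
  \/ (exists e, p = [:: (1, [:: gv (s e); ge e]); (-1, [:: ge e])])
  \/ (exists e, p = [:: (1, [:: ge e; gv (r e)]); (-1, [:: ge e])])
  \/ (ghosts /\ exists e, p = [:: (1, [:: gv (r e); gs e]); (-1, [:: gs e])])
  \/ (ghosts /\ exists e, p = [:: (1, [:: gs e; gv (s e)]); (-1, [:: gs e])]).

Definition enum_block (I : eqType) (blk : Ed -> I) (X : I) (l : seq Ed) : Prop :=
  uniq l /\ forall e, (e \in l) = (blk e == X).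

Variables (CI DI : eqType) (cblk : Ed -> CI) (dblk : Ed -> DI)
          (inS : CI -> Prop) (inT : DI -> Prop).

(* relation for X, X' in S:  sum_{Y in D} (XY)(YX')^* - delta_{X,X'} s(X);
   the nonzero terms are e f^* with e in X, f in X', e and f in the same D-block *)
Definition CL_rel_S (p : fpoly K gen) : Prop :=
  exists (X X' : CI) (lX lX' : seq Ed) (e0 : Ed),
    [/\ inS X, inS X', enum_block cblk X lX, enum_block cblk X' lX' & cblk e0 = X] /\
    p = [seq (1, [:: ge e; gs f]) | e <- lX, f <- [seq f <- lX' | dblk f == dblk e]]
        ++ (if X == X' then [:: (-1, [:: gv (s e0)])] else [::]).

(* relation for Y, Y' in T:  sum_{X in C} (YX)^*(XY') - delta_{Y,Y'} r(Y) *)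
Definition CL_rel_T (p : fpoly K gen) : Prop :=
  exists (Y Y' : DI) (lY lY' : seq Ed) (e0 : Ed),
    [/\ inT Y, inT Y', enum_block dblk Y lY, enum_block dblk Y' lY' & dblk e0 = Y] /\
    p = [seq (1, [:: gs e; ge f]) | e <- lY, f <- [seq f <- lY' | cblk f == cblk e]]
        ++ (if Y == Y' then [:: (-1, [:: gv (r e0)])] else [::]).

Definition CL_rel (p : fpoly K gen) : Prop :=
  path_rel true p \/ CL_rel_S p \/ CL_rel_T p.
End Graph.

(* Main.v *)
Require Import Defs.
From HB Require Import structures.
From mathcomp Require Import all_boot all_order all_algebra.
From mathcomp Require Import ring.
From Stdlib Require Import ClassicalEpsilon.
Set Implicit Arguments. Unset Strict Implicit. Unset Printing Implicit Defensive.
Import GRing.Theory.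
Local Open Scope ring_scope.

Section Gen.
Variable K : fieldType.

Definition hsum (T : Type) (l : seq (K * T)) (h : T -> K) : K :=
  \sum_(x <- l) x.1 * h x.2.

Lemma hsum_cat (T : Type) (l1 l2 : seq (K * T)) h :
  hsum (l1 ++ l2) h = hsum l1 h + hsum l2 h.
Proof. by rewrite /hsum big_cat. Qed.

Lemma hsum_cons (T : Type) c (u : T) l h : hsum ((c, u) :: l) h = c * h u + hsum l h.
Proof. by rewrite /hsum big_cons. Qed.

Lemma hsum_nil (T : Type) h : hsum (@nil (K * T)) h = 0.
Proof. by rewrite /hsum big_nil. Qed.

Lemma hsum_flatten (T : Type) (L : seq (seq (K * T))) h :
  hsum (flatten L) h = \sum_(p <- L) hsum p h.
Proof. by rewrite /hsum big_flatten. Qed.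

Lemma hsum_ext (T : Type) (l : seq (K * T)) h1 h2 :
  (forall u, h1 u = h2 u) -> hsum l h1 = hsum l h2.
Proof. by move=> H; apply: eq_bigr => x _; rewrite H. Qed.

Lemma L1 (T : eqType) (l : seq (K * T)) (h : T -> K) :
  (forall u, h u != 0 -> \sum_(x <- l | x.2 == u) x.1 = 0) -> hsum l h = 0.
Proof.
move: {2}(size l) (leqnn (size l)) => n; elim: n l => [|n IH] l.
  by rewrite leqn0 => /nilP ->; rewrite /hsum big_nil.
case: l => [|[c u0] l] Hs H; first by rewrite /hsum big_nil.
rewrite /hsum (bigID (fun x => x.2 == u0)) /=.
have -> : \sum_(x <- (c, u0) :: l | x.2 == u0) x.1 * h x.2
          = (\sum_(x <- (c,u0)::l | x.2 == u0) x.1) * h u0.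
  by rewrite big_distrl /=; apply: eq_bigr => x /eqP ->.
have -> : (\sum_(x <- (c,u0)::l | x.2 == u0) x.1) * h u0 = 0.
  by case: (eqVneq (h u0) 0) => [->|/H ->]; rewrite ?mulr0 ?mul0r.
rewrite add0r -big_filter.
apply: IH.
  rewrite size_filter /= eqxx /=.
  by apply: leq_trans (count_size _ _) _; rewrite -ltnS.
move=> u hu; rewrite big_filter_cond.
case: (eqVneq u u0) => [->|ne].
  by rewrite big_pred0 // => x; case: eqP.
rewrite -[RHS](H u hu); apply: eq_bigl => x /=.
by case: (eqVneq x.2 u) => [->|]; rewrite ?ne ?andbF.
Qed.

Lemma equiv_hsum (T : eqType) (f g : seq (K * T)) :
  (forall w, \sum_(x <- f | x.2 == w) x.1 = \sum_(x <- g | x.2 == w) x.1) ->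
  forall h, hsum f h = hsum g h.
Proof.
move=> H h; apply/eqP; rewrite -subr_eq0; apply/eqP.
have E : hsum f h - hsum g h = hsum (f ++ [seq (- x.1, x.2) | x <- g]) h.
  rewrite hsum_cat /hsum big_map; congr (_ + _).
  by rewrite -sumrN; apply: eq_bigr => x _ /=; rewrite mulNr.
rewrite E; apply: L1 => u _.
by rewrite big_cat big_map /= sumrN H subrr.
Qed.

Lemma fcoef_hsum (T : eqType) (f : fpoly K T) w :
  fcoef f w = hsum f (fun u => (u == w)%:R).
Proof.
rewrite /fcoef /hsum big_mkcond; apply: eq_bigr => x _.
by case: eqP => _; rewrite ?mulr1 ?mulr0.
Qed.

Lemma hsum_fcoef (T : eqType) (f g : fpoly K T) :
  (forall h, hsum f h = hsum g h) -> forall w, fcoef f w = fcoef g w.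
Proof. by move=> H w; rewrite !fcoef_hsum H. Qed.

Lemma fcoef_equiv (T : eqType) (f g : fpoly K T) :
  (forall w, fcoef f w = fcoef g w) -> forall h, hsum f h = hsum g h.
Proof. by move=> H; apply: equiv_hsum. Qed.

Lemma hsum_sand (T : eqType) c (a : seq T) p b h :
  hsum (fsandwich c a p b) h = c * hsum p (fun u => h (a ++ u ++ b)).
Proof.
rewrite /hsum /fsandwich big_map big_distrr /=.
by apply: eq_bigr => x _; rewrite mulrA.
Qed.

Section Ideal.
Variable G : eqType.
Variable A : pred G.
Variable R : fpoly K G -> Prop.

Lemma in_ideal_equiv f g : in_ideal A R f ->
  (forall h, hsum f h = hsum g h) -> in_ideal A R g.
Proof.
case=> l [Hl Hc] H; exists l; split => // w.
rewrite -(Hc w); apply: hsum_fcoef => h; by rewrite H.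
Qed.

Lemma in_ideal_nil : in_ideal A R [::].
Proof. by exists [::]; split. Qed.

Lemma in_ideal_cat f g : in_ideal A R f -> in_ideal A R g -> in_ideal A R (f ++ g).
Proof.
case=> l1 [H1 C1] [l2 [H2 C2]]; exists (l1 ++ l2); split.
  by move=> t; rewrite mem_cat => /orP [] ?; [apply: H1 | apply: H2].
move=> w; rewrite map_cat flatten_cat /fcoef !big_cat /=.
by rewrite -/(fcoef f w) -/(fcoef g w) C1 C2.
Qed.

Lemma in_ideal_gen c a r b : R r -> all A a -> all A b ->
  in_ideal A R (fsandwich c a r b).
Proof.
move=> Hr Ha Hb; exists [:: (c, a, r, b)]; split.
  by move=> t; rewrite inE => /eqP -> /=.
by move=> w; rewrite /= cats0.
Qed.

Lemma in_ideal_sand c a f b : in_ideal A R f -> all A a -> all A b ->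
  in_ideal A R (fsandwich c a f b).
Proof.
case=> l [Hl Hc] Ha Hb.
exists [seq (c * t.1.1.1, a ++ t.1.1.2, t.1.2, t.2 ++ b) | t <- l]; split.
  move=> t /mapP [t0 /Hl [h1 h2 h3] ->] /=; split=> //; rewrite all_cat; apply/andP; by split.
apply: hsum_fcoef => h.
rewrite hsum_sand (fcoef_equiv Hc) !hsum_flatten big_distrr big_map /= !big_map.
apply: eq_bigr => t _; rewrite !hsum_sand mulrA; congr (_ * _).
by apply: hsum_ext => u; rewrite !catA.
Qed.

Lemma in_ideal_flatten (L : seq (fpoly K G)) :
  (forall p, p \in L -> in_ideal A R p) -> in_ideal A R (flatten L).
Proof.
elim: L => [|p L IH] H /=; first exact: in_ideal_nil.
apply: in_ideal_cat; first by apply: H; rewrite inE eqxx.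
by apply: IH => q hq; apply: H; rewrite inE hq orbT.
Qed.

End Ideal.

Lemma in_ideal_mono (G : eqType) (A A' : pred G) (R R' : fpoly K G -> Prop) f :
  (forall x, A x -> A' x) -> (forall p, R p -> R' p) ->
  in_ideal A R f -> in_ideal A' R' f.
Proof.
move=> HA HR [l [Hl Hc]]; exists l; split => // t /Hl [h1 h2 h3]; split.
- exact: HR.
- by apply/allP => x /(allP h2); apply: HA.
- by apply/allP => x /(allP h3); apply: HA.
Qed.


Definition act (G N : Type) (rho : G -> N -> option N) (w : seq G) (y : N) : option N :=
  foldr (fun g o => obind (rho g) o) (Some y) w.

Lemma act_cat (G N : Type) (rho : G -> N -> option N) a b y :
  act rho (a ++ b) y = obind (act rho a) (act rho b y).
Proof.
elim: a => [|g a IH] /=; first by case: (act rho b y).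
by rewrite IH; case: (act rho b y).
Qed.

Lemma rep_ideal (G : eqType) (N : Type) (rho : G -> N -> option N) (A : pred G)
   (R : fpoly K G -> Prop) f :
  (forall p, R p -> forall y h, hsum p (fun w => oapp h 0 (act rho w y)) = 0) ->
  in_ideal A R f -> forall y h, hsum f (fun w => oapp h 0 (act rho w y)) = 0.
Proof.
move=> HR [l [Hl Hc]] y h.
rewrite (fcoef_equiv Hc) hsum_flatten big_map big1_seq // => -[[[c a] p] b] /andP [_ /Hl [Hp _ _]] /=.
rewrite hsum_sand.
case E: (act rho b y) => [y'|].
  rewrite (@hsum_ext _ _ _ (fun w => oapp (fun z => oapp h 0 (act rho a z)) 0 (act rho w y'))).
    by rewrite HR ?mulr0.
  move=> u; rewrite !act_cat E /=.
  by case: (act rho u y').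
rewrite /hsum big1 ?mulr0 // => x _.
by rewrite !act_cat E /= mulr0.
Qed.

Lemma sum_if_eq (T : eqType) (l : seq T) (e : T) (c : K) : uniq l ->
  \sum_(f <- l) (if f == e then c else 0) = if e \in l then c else 0.
Proof.
elim: l => [|x l IH] /=; first by rewrite big_nil.
move=> /andP [nx ul]; rewrite big_cons IH // inE.
have [Hx|ne] := eqVneq x e.
  by subst x; rewrite /= (negbTE nx) addr0.
by rewrite add0r.
Qed.

Lemma sum_unique (T : eqType) (l : seq T) (P : T -> bool) (c : K) f :
  uniq l -> f \in l -> P f -> (forall e, e \in l -> P e -> e = f) ->
  \sum_(e <- l) (if P e then c else 0) = c.
Proof.
move=> ul fl Pf H; rewrite (bigD1_seq f) //= Pf big1_seq ?addr0 // => e /andP [ne el].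
case: ifP => // Pe; by rewrite (H e el Pe) eqxx in ne.
Qed.

Lemma sum_none (T : eqType) (l : seq T) (P : T -> bool) (c : K) :
  (forall e, e \in l -> ~~ P e) -> \sum_(e <- l) (if P e then c else 0) = 0.
Proof. by move=> H; rewrite big1_seq // => e /andP [_ /H /negbTE ->]. Qed.

End Gen.


Section Tree.
Variables (K : fieldType) (V Ed : eqType) (s r : Ed -> V)
  (CI DI : eqType) (cblk : Ed -> CI) (dblk : Ed -> DI)
  (inS : CI -> Prop) (inT : DI -> Prop).
Hypothesis hC : forall e f, cblk e = cblk f -> s e = s f.
Hypothesis hD : forall e f, dblk e = dblk f -> r e = r f.

Definition chS (X : CI) : option Ed :=
  match excluded_middle_informative (inS X /\ exists e, cblk e = X) with
  | left H => Some (proj1_sig (constructive_indefinite_description _ (proj2 H)))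
  | right _ => None end.
Definition chT (Y : DI) : option Ed :=
  match excluded_middle_informative (inT Y /\ exists e, dblk e = Y) with
  | left H => Some (proj1_sig (constructive_indefinite_description _ (proj2 H)))
  | right _ => None end.

Lemma chS_some X e : chS X = Some e -> cblk e = X.
Proof.
rewrite /chS; case: excluded_middle_informative => // H [<-].
by case: constructive_indefinite_description.
Qed.
Lemma chT_some Y e : chT Y = Some e -> dblk e = Y.
Proof.
rewrite /chT; case: excluded_middle_informative => // H [<-].
by case: constructive_indefinite_description.
Qed.
Lemma chS_ex X e : inS X -> cblk e = X -> exists f, chS X = Some f.
Proof.
move=> HX He; rewrite /chS; case: excluded_middle_informative => [H|[]]; first by eexists.
by split=> //; exists e.
Qed.
Lemma chT_ex Y e : inT Y -> dblk e = Y -> exists f, chT Y = Some f.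
Proof.
move=> HY He; rewrite /chT; case: excluded_middle_informative => [H|[]]; first by eexists.
by split=> //; exists e.
Qed.

Variables (v0 : V) (es : seq Ed).
Hypothesis chain_ok : forall i e, nth None (map Some es) i = Some e ->
  s e = (if i is j.+1 then oapp r v0 (nth None (map Some es) j) else v0).

Definition Node := (nat * seq (bool * Ed))%type.
Definition ce (i : nat) : option Ed := nth None (map Some es) i.

Definition label (x : Node) : V :=
  match x with
  | (i, [::]) => if i is j.+1 then oapp r v0 (ce j) else v0
  | (_, (true, e) :: _) => r e
  | (_, (false, e) :: _) => s e
  end.
Definition occ_out (x : Node) (X : CI) : bool :=
  match x with
  | (i, [::]) => if ce i is Some e then cblk e == X else false
  | (_, (false, e) :: _) => cblk e == X
  | _ => false
  end.
Definition occ_in (x : Node) (Y : DI) : bool :=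
  match x with
  | (i, [::]) => if i is j.+1 then (if ce j is Some e then dblk e == Y else false) else false
  | (_, (true, e) :: _) => dblk e == Y
  | _ => false
  end.
Definition okout (x : Node) e :=
  (chS (cblk e) == Some e) && (s e == label x) && ~~ occ_out x (cblk e).
Definition okin (x : Node) e :=
  (chT (dblk e) == Some e) && (r e == label x) && ~~ occ_in x (dblk e).
Fixpoint validw (i : nat) (w : seq (bool * Ed)) : bool :=
  match w with
  | [::] => (i <= size es)%N
  | (b, e) :: w' => validw i w' && (if b then okout (i, w') e else okin (i, w') e)
  end.
Definition valid (x : Node) := validw x.1 x.2.
Lemma valid_nil i : valid (i, [::]) = (i <= size es)%N.
Proof. by []. Qed.
Lemma valid_cons i b e w : valid (i, (b, e) :: w) =
  valid (i, w) && (if b then okout (i, w) e else okin (i, w) e).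
Proof. by []. Qed.
Arguments valid : simpl never.
Definition par_in (x : Node) e : option Node :=
  match x with
  | (i, [::]) => if i is j.+1 then (if ce j == Some e then Some (j, [::]) else None) else None
  | (i, (true, e') :: w) => if e' == e then Some (i, w) else None
  | _ => None
  end.
Definition par_out (x : Node) e : option Node :=
  match x with
  | (i, [::]) => if ce i == Some e then Some (i.+1, [::]) else None
  | (i, (false, e') :: w) => if e' == e then Some (i, w) else None
  | _ => None
  end.
Definition rho_e e (x : Node) : option Node :=
  if ~~ valid x then None else
  if par_in x e is Some y then Some y else
  if okin x e then Some (x.1, (false, e) :: x.2) else None.
Definition rho_s e (x : Node) : option Node :=
  if ~~ valid x then None else
  if par_out x e is Some y then Some y else
  if okout x e then Some (x.1, (true, e) :: x.2) else None.
Definition rho_v v (x : Node) : option Node :=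
  if valid x && (label x == v) then Some x else None.
Definition rho (g : gen V Ed) : Node -> option Node :=
  match g with
  | inl v => rho_v v
  | inr (inl e) => rho_e e
  | inr (inr e) => rho_s e
  end.

Lemma ce_some i e : ce i = Some e -> (i < size es)%N /\ nth e es i = e.
Proof.
rewrite /ce; case: (ltnP i (size es)) => H.
  by rewrite (nth_map e) // => -[->].
by rewrite nth_default ?size_map.
Qed.

Lemma L_s e y x : rho_s e y = Some x ->
  [/\ valid y, valid x, label y = s e, label x = r e & rho_e e x = Some y].
Proof.
rewrite /rho_s; case Vy: (valid y) => //=.
case P: (par_out y e) => [x'|].
  move=> [<-]; case: y Vy P => i [|[[] e'] w] Vy //=.
    case: eqP => // Hc [<-]; have [Hi Hn] := ce_some Hc.
    rewrite /rho_e valid_nil Hi /= Hc eqxx; split => //.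
    by rewrite (chain_ok Hc).
  case: eqP => // He [<-]; subst e'; move: (Vy); rewrite valid_cons => /andP [Vw Hok].
  move: (Hok); rewrite /okin => /andP [/andP [_ /eqP Hr] Hocc].
  split => //.
  rewrite /rho_e Vw.
  have -> : par_in (i, w) e = None.
    move: Hocc; case: w {Vw Hok Hr Vy} => [|[[] e''] w] //=.
      case: i => [|j] //=; case: (ce j) => [e0|] //=.
      case: (eqVneq e0 e) => [->|ne]; first by rewrite eqxx.
      by rewrite (_ : (Some e0 == Some e) = false) //; apply/eqP => -[/eqP]; rewrite (negbTE ne).
    by case: (eqVneq e'' e) => [->|]; rewrite ?eqxx.
  by rewrite /= Hok.
case Ok: (okout y e) => // -[<-].
move: (Ok); rewrite /okout => /andP [/andP [_ /eqP Hs] _].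
case: y Vy P Ok Hs => i w Vy P Ok Hs.
split => //; first by rewrite valid_cons Vy Ok.
by rewrite /rho_e valid_cons Vy Ok /= eqxx.
Qed.


Lemma L_e e x y : rho_e e x = Some y ->
  [/\ valid x, valid y, label x = r e, label y = s e & rho_s e y = Some x].
Proof.
rewrite /rho_e; case Vx: (valid x) => //=.
case P: (par_in x e) => [y'|].
  move=> [<-]; case: x Vx P => i [|[[] e'] w] Vx //=.
    case: i Vx => [|j] Vx //=.
    case: eqP => // Hc [<-]; have [Hj Hn] := ce_some Hc.
    rewrite /rho_s valid_nil (ltnW Hj) /= Hc eqxx; split => //.
    by rewrite (chain_ok Hc).
  case: eqP => // He [<-]; subst e'; move: (Vx); rewrite valid_cons => /andP [Vw Hok].
  move: (Hok); rewrite /okout => /andP [/andP [_ /eqP Hs] Hocc].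
  split => //.
  rewrite /rho_s Vw.
  have -> : par_out (i, w) e = None.
    move: Hocc; case: w {Vw Hok Hs Vx} => [|[[] e''] w] //=.
      case: (ce i) => [e0|] //=.
      case: (eqVneq e0 e) => [->|ne]; first by rewrite eqxx.
      by rewrite (_ : (Some e0 == Some e) = false) //; apply/eqP => -[/eqP]; rewrite (negbTE ne).
    by case: (eqVneq e'' e) => [->|]; rewrite ?eqxx.
  by rewrite /= Hok.
case Ok: (okin x e) => // -[<-].
move: (Ok); rewrite /okin => /andP [/andP [_ /eqP Hr] _].
case: x Vx P Ok Hr => i w Vx P Ok Hr.
split => //; first by rewrite valid_cons Vx Ok.
by rewrite /rho_s valid_cons Vx Ok /= eqxx.
Qed.

Lemma pin_occ x e y : par_in x e = Some y -> occ_in x (dblk e).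
Proof.
case: x => i [|[[] e'] w] //=; last by case: eqP => // ->.
case: i => [|j] //=; case: (ce j) => [e0|] //=.
by case: (eqVneq e0 e) => [->|ne] //; rewrite (_ : (Some e0 == Some e) = false) //;
  apply/eqP => -[/eqP]; rewrite (negbTE ne).
Qed.

Lemma pout_occ x e y : par_out x e = Some y -> occ_out x (cblk e).
Proof.
case: x => i [|[[] e'] w] //=; last by case: eqP => // ->.
case: (ce i) => [e0|] //=.
by case: (eqVneq e0 e) => [->|ne] //; rewrite (_ : (Some e0 == Some e) = false) //;
  apply/eqP => -[/eqP]; rewrite (negbTE ne).
Qed.

Lemma someeq (T : eqType) (a b : T) : (Some a == Some b) = (a == b).
Proof. by apply/eqP/eqP => [[]|->]. Qed.

Lemma pin_uniq x e e' y y' : par_in x e = Some y -> par_in x e' = Some y' -> e = e'.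
Proof.
case: x => i [|[[] e0] w] //=.
  case: i => [|j] //=; case: (ce j) => [e1|] //=; rewrite !someeq.
  by case: eqP => // <-; case: eqP.
by case: eqP => // <-; case: eqP.
Qed.

Lemma pout_uniq x e e' y y' : par_out x e = Some y -> par_out x e' = Some y' -> e = e'.
Proof.
case: x => i [|[[] e0] w] //=; last by case: eqP => // <-; case: eqP.
by case: (ce i) => [e1|] //=; rewrite !someeq; case: eqP => // <-; case: eqP.
Qed.

Lemma F1 e e' x y1 y2 : rho_e e x = Some y1 -> rho_e e' x = Some y2 ->
  dblk e = dblk e' -> e = e'.
Proof.
move=> H1 H2 Hd; move: H1 H2; rewrite /rho_e; case: (valid x) => //=.
case P1: (par_in x e) => [y|]; case P2: (par_in x e') => [y'|].
- by move=> _ _; apply: pin_uniq P1 P2.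
- case Ok: (okin x e') => // _ _.
  move: (pin_occ P1); rewrite Hd => Hocc.
  by move: Ok; rewrite /okin Hocc andbF.
- case Ok: (okin x e) => // _ _.
  move: (pin_occ P2); rewrite -Hd => Hocc.
  by move: Ok; rewrite /okin Hocc andbF.
- case Ok1: (okin x e) => //; case Ok2: (okin x e') => // _ _.
  move: Ok1 Ok2; rewrite /okin Hd => /andP [/andP [/eqP -> _] _] /andP [/andP [/eqP [] -> _] _].
  by [].
Qed.

Lemma F2 e e' y x1 x2 : rho_s e y = Some x1 -> rho_s e' y = Some x2 ->
  cblk e = cblk e' -> e = e'.
Proof.
move=> H1 H2 Hd; move: H1 H2; rewrite /rho_s; case: (valid y) => //=.
case P1: (par_out y e) => [x|]; case P2: (par_out y e') => [x'|].
- by move=> _ _; apply: pout_uniq P1 P2.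
- case Ok: (okout y e') => // _ _.
  move: (pout_occ P1); rewrite Hd => Hocc.
  by move: Ok; rewrite /okout Hocc andbF.
- case Ok: (okout y e) => // _ _.
  move: (pout_occ P2); rewrite -Hd => Hocc.
  by move: Ok; rewrite /okout Hocc andbF.
- case Ok1: (okout y e) => //; case Ok2: (okout y e') => // _ _.
  move: Ok1 Ok2; rewrite /okout Hd => /andP [/andP [/eqP -> _] _] /andP [/andP [/eqP [] -> _] _].
  by [].
Qed.

Lemma F3 y X f0 : valid y -> inS X -> cblk f0 = X -> s f0 = label y ->
  exists f, cblk f = X /\ rho_s f y != None.
Proof.
move=> Vy HX Hf0 Hl; case Hocc: (occ_out y X).
  move: Hocc; case: y Vy Hl => i [|[[] e] w] Vy Hl //=.
    case Hc: (ce i) => [e|] //= /eqP <-; exists e; split => //.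
    by rewrite /rho_s Vy /= Hc eqxx.
  move=> /eqP <-; exists e; split => //.
  by rewrite /rho_s Vy /= eqxx.
have [f Hf] := chS_ex HX Hf0.
have Hcf := chS_some Hf.
exists f; split => //.
rewrite /rho_s Vy /=; case: (par_out y f) => // .
have -> : okout y f by rewrite /okout Hcf Hf eqxx /= -Hl (hC (esym (etrans Hcf (esym Hf0)))) eqxx Hocc.
by [].
Qed.

Lemma F4 x Y f0 : valid x -> inT Y -> dblk f0 = Y -> r f0 = label x ->
  exists f, dblk f = Y /\ rho_e f x != None.
Proof.
move=> Vx HY Hf0 Hl; case Hocc: (occ_in x Y).
  move: Hocc; case: x Vx Hl => i [|[[] e] w] Vx Hl //=.
    case: i Vx Hl => [|j] Vx Hl //=.
    case Hc: (ce j) => [e|] //= /eqP <-; exists e; split => //.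
    by rewrite /rho_e Vx /= Hc eqxx.
  move=> /eqP <-; exists e; split => //.
  by rewrite /rho_e Vx /= eqxx.
have [f Hf] := chT_ex HY Hf0.
have Hcf := chT_some Hf.
exists f; split => //.
rewrite /rho_e Vx /=; case: (par_in x f) => // .
have -> : okin x f by rewrite /okin Hcf Hf eqxx /= -Hl (hD (esym (etrans Hcf (esym Hf0)))) eqxx Hocc.
by [].
Qed.


Notation H_ y h := (fun w => oapp h 0 (act rho w y)).

Lemma termS e f y (h : Node -> K) : dblk f = dblk e ->
  oapp h 0 (obind (rho_e e) (rho_s f y)) =
  if f == e then (if rho_s e y != None then h y else 0) else 0.
Proof.
move=> Hd; case Es: (rho_s f y) => [x|] /=.
  have [_ _ _ _ Hx] := L_s Es.
  case Ee: (rho_e e x) => [y'|] /=.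
    have Hef := F1 Ee Hx (esym Hd); subst e.
    by move: Ee; rewrite Hx => -[<-]; rewrite eqxx Es.
  by case: eqP => // He; subst e; rewrite Hx in Ee.
by case: eqP => // Hfe; subst f; rewrite Es.
Qed.

Lemma termT e f y (h : Node -> K) : cblk f = cblk e ->
  oapp h 0 (obind (rho_s e) (rho_e f y)) =
  if f == e then (if rho_e e y != None then h y else 0) else 0.
Proof.
move=> Hd; case Es: (rho_e f y) => [x|] /=.
  have [_ _ _ _ Hx] := L_e Es.
  case Ee: (rho_s e x) => [y'|] /=.
    have Hef := F2 Ee Hx (esym Hd); subst e.
    by move: Ee; rewrite Hx => -[<-]; rewrite eqxx Es.
  by case: eqP => // He; subst e; rewrite Hx in Ee.
by case: eqP => // Hfe; subst f; rewrite Es.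
Qed.

Lemma countS X lX e0 y (h : Node -> K) : inS X -> enum_block cblk X lX -> cblk e0 = X ->
  \sum_(e <- lX) (if rho_s e y != None then h y else 0) =
  if valid y && (label y == s e0) then h y else 0.
Proof.
move=> HX [uX eX] He0.
case: ifP => [/andP [Vy /eqP Ly]|Hn].
  have [f [Hf Hsf]] := F3 Vy HX He0 (esym Ly).
  apply: (@sum_unique K Ed lX (fun e => rho_s e y != None) (h y) f uX); [by rewrite eX Hf | exact: Hsf |].
  move=> e; rewrite eX => /eqP He.
  case E1: (rho_s e y) => [x1|] // _; case E2: (rho_s f y) => [x2|]; last by rewrite E2 in Hsf.
  by rewrite (F2 E1 E2 (etrans He (esym Hf))).
apply: (@sum_none K Ed lX (fun e => rho_s e y != None) (h y)) => e; rewrite eX => /eqP He.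
case E: (rho_s e y) => [x|] //; have [Vy _ Ly _ _] := L_s E.
by move: Hn; rewrite Vy Ly (hC (etrans He (esym He0))) eqxx.
Qed.

Lemma countT Y lY e0 y (h : Node -> K) : inT Y -> enum_block dblk Y lY -> dblk e0 = Y ->
  \sum_(e <- lY) (if rho_e e y != None then h y else 0) =
  if valid y && (label y == r e0) then h y else 0.
Proof.
move=> HY [uY eY] He0.
case: ifP => [/andP [Vy /eqP Ly]|Hn].
  have [f [Hf Hsf]] := F4 Vy HY He0 (esym Ly).
  apply: (@sum_unique K Ed lY (fun e => rho_e e y != None) (h y) f uY); [by rewrite eY Hf | exact: Hsf |].
  move=> e; rewrite eY => /eqP He.
  case E1: (rho_e e y) => [x1|] // _; case E2: (rho_e f y) => [x2|]; last by rewrite E2 in Hsf.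
  by rewrite (F1 E1 E2 (etrans He (esym Hf))).
apply: (@sum_none K Ed lY (fun e => rho_e e y != None) (h y)) => e; rewrite eY => /eqP He.
case E: (rho_e e y) => [x|] //; have [Vy _ Ly _ _] := L_e E.
by move: Hn; rewrite Vy Ly (hD (etrans He (esym He0))) eqxx.
Qed.

Lemma tree_kills (p : fpoly K (gen V Ed)) :
  @CL_rel K V Ed s r CI DI cblk dblk inS inT p ->
  forall y h, hsum p (H_ y h) = 0.
Proof.
move=> Hp y h.
case: Hp => [[[v [w ->]] | [[e ->] | [[e ->] | [[_ [e ->]] | [_ [e ->]]]]]] | [HS | HT]].
- case: (eqVneq v w) => [<-|ne].
    rewrite !hsum_cons hsum_nil /= /rho_v; case: ifP => E /=; rewrite ?E /=; ring.
  rewrite hsum_cons hsum_nil /= /rho_v.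
  case: ifP => [/andP [Vy /eqP Ly]|E] /=; last by rewrite mulr0 addr0.
  by rewrite Vy Ly eq_sym (negbTE ne) /= mulr0 addr0.
- rewrite !hsum_cons hsum_nil /=.
  case E: (rho_e e y) => [x|] /=; last by rewrite !mulr0 !addr0.
  have [_ Vx _ Lx _] := L_e E.
  rewrite /rho_v Vx Lx eqxx /=; ring.
- rewrite !hsum_cons hsum_nil /= /rho_v.
  case E: (rho_e e y) => [x|] /=.
    have [Vy _ Ly _ _] := L_e E.
    rewrite Vy Ly eqxx /= E /=; ring.
  by case: ifP => _ /=; rewrite ?E /= !mulr0 !addr0.
- rewrite !hsum_cons hsum_nil /=.
  case E: (rho_s e y) => [x|] /=; last by rewrite !mulr0 !addr0.
  have [_ Vx _ Lx _] := L_s E.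
  rewrite /rho_v Vx Lx eqxx /=; ring.
- rewrite !hsum_cons hsum_nil /= /rho_v.
  case E: (rho_s e y) => [x|] /=.
    have [Vy _ Ly _ _] := L_s E.
    rewrite Vy Ly eqxx /= E /=; ring.
  by case: ifP => _ /=; rewrite ?E /= !mulr0 !addr0.
- case: HS => [X [X' [lX [lX' [e0 [[HX HX' EX EX' He0] ->]]]]]].
  rewrite hsum_cat /hsum big_allpairs_dep /=.
  have inner : forall e, \sum_(f <- [seq f <- lX' | dblk f == dblk e])
      1 * oapp h 0 (act rho [:: ge V e; gs V f] y) =
      if e \in lX' then (if rho_s e y != None then h y else 0) else 0.
    move=> e; rewrite big_filter big_mkcond /=.
    rewrite (eq_bigr (fun f => if f == e then (if rho_s e y != None then h y else 0) else 0)).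
      by rewrite sum_if_eq //; case: EX'.
    move=> f _; case: ifP => [/eqP Hd|Hd]; first by rewrite mul1r termS.
    by case: eqP => // He; subst f; rewrite eqxx in Hd.
  under eq_bigr => e _ do rewrite inner.
  case: (eqVneq X X') => [HXX|ne].
    subst X'; rewrite big_cons big_nil /=.
    rewrite (eq_big_seq (fun e => if rho_s e y != None then h y else 0)).
      rewrite (countS y h HX EX He0) /rho_v; case: ifP => _ /=; ring.
    move=> e; case: EX => _ ->; case: EX' => _ -> -> //.
  rewrite big_nil addr0 big1_seq // => e /andP [_].
  case: EX => _ -> /eqP He; case: EX' => _ ->; rewrite He (negbTE ne) //.
- case: HT => [Y [Y' [lY [lY' [e0 [[HY HY' EY EY' He0] ->]]]]]].
  rewrite hsum_cat /hsum big_allpairs_dep /=.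
  have inner : forall e, \sum_(f <- [seq f <- lY' | cblk f == cblk e])
      1 * oapp h 0 (act rho [:: gs V e; ge V f] y) =
      if e \in lY' then (if rho_e e y != None then h y else 0) else 0.
    move=> e; rewrite big_filter big_mkcond /=.
    rewrite (eq_bigr (fun f => if f == e then (if rho_e e y != None then h y else 0) else 0)).
      by rewrite sum_if_eq //; case: EY'.
    move=> f _; case: ifP => [/eqP Hd|Hd]; first by rewrite mul1r termT.
    by case: eqP => // He; subst f; rewrite eqxx in Hd.
  under eq_bigr => e _ do rewrite inner.
  case: (eqVneq Y Y') => [HYY|ne].
    subst Y'; rewrite big_cons big_nil /=.
    rewrite (eq_big_seq (fun e => if rho_e e y != None then h y else 0)).
      rewrite (countT y h HY EY He0) /rho_v; case: ifP => _ /=; ring.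
    move=> e; case: EY => _ ->; case: EY' => _ -> -> //.
  rewrite big_nil addr0 big1_seq // => e /andP [_].
  case: EY => _ -> /eqP He; case: EY' => _ ->; rewrite He (negbTE ne) //.
Qed.

Lemma act_rcons w g y : act rho (rcons w g) y = obind (act rho w) (rho g y).
Proof. by rewrite -cats1 act_cat. Qed.

Lemma act_Z L i w0 e' :
  act rho (map (@ge V Ed) L) (i, (false, e') :: w0) = None \/
  exists e'' w', act rho (map (@ge V Ed) L) (i, (false, e') :: w0) = Some (i, (false, e'') :: w').
Proof.
elim: L => [|e L IH] /=; first by right; exists e', w0.
case: IH => [->|[e'' [w' ->]]] /=; first by left.
rewrite /rho_e; case: (valid _) => /=; last by left.
case: (okin _ e) => /=; last by left.
by right; exists e, ((false, e'') :: w').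
Qed.

Lemma chain_uniq L j : act rho (map (@ge V Ed) L) (j, [::]) = Some (0%N, [::]) -> L = take j es.
Proof.
elim/last_ind: L j => [|L e IH] j /=.
  by case=> ->; rewrite take0.
rewrite map_rcons act_rcons /= /rho_e; case: (valid _) => //=.
case: j => [|j] /=.
  case: (okin _ e) => //=.
  by case: (act_Z L 0 [::] e) => [->|[e'' [w' ->]]].
case Hc: (ce j == Some e).
  move=> /IH ->; move/eqP: Hc => /ce_some [Hj Hn].
  by rewrite (take_nth e Hj) Hn.
case: (okin _ e) => //=.
by case: (act_Z L j.+1 [::] e) => [->|[e'' [w' ->]]].
Qed.

Lemma chain_exists j : (j <= size es)%N ->
  act rho (map (@ge V Ed) (take j es)) (j, [::]) = Some (0%N, [::]).
Proof.
elim: j => [|j IH] Hj; first by rewrite take0.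
case Hc: (ce j) => [e|]; last first.
  have := @mem_nth _ None (map Some es) j; rewrite size_map Hj.
  by move: Hc; rewrite /ce => -> /(_ isT) /mapP [x _].
have [Hj' Hn] := ce_some Hc.
rewrite (take_nth e Hj') Hn map_rcons act_rcons /= /rho_e valid_nil Hj /= Hc eqxx /=.
by apply: IH; apply: ltnW.
Qed.

End Tree.


Section NF.
Variables (K : fieldType) (V Ed : eqType) (s r : Ed -> V).

Definition NF := option (V + (Ed * seq Ed)).
Definition word_of (m : NF) : seq (gen V Ed) :=
  match m with
  | None => [::]
  | Some (inl v) => [:: gv Ed v]
  | Some (inr (e, L)) => map (@ge V Ed) (e :: L)
  end.
Definition comb (g : gen V Ed) (m : NF) : option NF :=
  match g, m with
  | inl v, None => Some (Some (inl v))
  | inl v, Some (inl u) => if v == u then Some m else None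
  | inl v, Some (inr (e, L)) => if v == s e then Some m else None
  | inr (inl e), None => Some (Some (inr (e, [::])))
  | inr (inl e), Some (inl u) => if r e == u then Some (Some (inr (e, [::]))) else None
  | inr (inl e), Some (inr (f, L)) => if r e == s f then Some (Some (inr (e, f :: L))) else None
  | inr (inr _), _ => None
  end.
Fixpoint nfw (w : seq (gen V Ed)) : option NF :=
  match w with
  | [::] => Some None
  | g :: w' => obind (comb g) (nfw w')
  end.
Definition okNF (m : NF) : bool :=
  match m with
  | Some (inr (e, L)) => path (fun a b => r a == s b) e L
  | _ => true
  end.

Lemma nfw_ok w m : nfw w = Some m -> okNF m.
Proof.
elim: w m => [|g w IH] m /=; first by case=> <-.
case: (nfw w) IH => [m0|] // /(_ m0 erefl) Hm0.
case: g => [v|[e|e]] //=; case: m0 Hm0 => [[u|[f L]]|] //= Hm0.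
- by case: eqP => // _ [<-].
- by case: eqP => // _ [<-].
- by move=> [<-].
- by case: eqP => // _ [<-].
- by case: eqP => // H [<-] /=; rewrite H eqxx.
- by move=> [<-].
Qed.

Local Notation NG := (@nonghost V Ed).
Local Notation PR := (@path_rel K V Ed s r false).

Definition rel1 v w : fpoly K (gen V Ed) :=
  (1, [:: gv Ed v; gv Ed w]) :: (if v == w then [:: (-1, [:: gv Ed v])] else [::]).
Definition rel2 e : fpoly K (gen V Ed) := [:: (1, [:: gv Ed (s e); ge V e]); (-1, [:: ge V e])].
Definition rel3 e : fpoly K (gen V Ed) := [:: (1, [:: ge V e; gv Ed (r e)]); (-1, [:: ge V e])].

Lemma R1 v w c a b : all NG a -> all NG b -> in_ideal NG PR (fsandwich c a (rel1 v w) b).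
Proof. by move=> Ha Hb; apply: in_ideal_gen => //; left; exists v, w. Qed.
Lemma R2 e c a b : all NG a -> all NG b -> in_ideal NG PR (fsandwich c a (rel2 e) b).
Proof. by move=> Ha Hb; apply: in_ideal_gen => //; right; left; exists e. Qed.
Lemma R3 e c a b : all NG a -> all NG b -> in_ideal NG PR (fsandwich c a (rel3 e) b).
Proof. by move=> Ha Hb; apply: in_ideal_gen => //; right; right; left; exists e. Qed.

Lemma allNG_map L : all NG (map (@ge V Ed) L).
Proof. by elim: L. Qed.

Definition dif g m : fpoly K (gen V Ed) :=
  (1, g :: word_of m) :: (if comb g m is Some m' then [:: (-1, word_of m')] else [::]).

Ltac hs := rewrite ?hsum_cat ?hsum_sand ?hsum_cons ?hsum_nil ?hsum_cons ?hsum_nil /= ?cats0 /gv /ge /gs; ring.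

Lemma dif_ideal g m : NG g -> in_ideal NG PR (dif g m).
Proof.
move=> Hg; rewrite /dif.
case: g Hg => [v|[e|e]] // _; case: m => [[u|[f L]]|] /=.
- case: (eqVneq v u) => [<-|ne].
    apply: (in_ideal_equiv (R1 v v 1 (a := [::]) (b := [::]) erefl erefl)) => h.
    by rewrite /rel1 eqxx; hs.
  apply: (in_ideal_equiv (R1 v u 1 (a := [::]) (b := [::]) erefl erefl)) => h.
  by rewrite /rel1 (negbTE ne); hs.
- case: (eqVneq v (s f)) => [->|ne].
    apply: (in_ideal_equiv (R2 f 1 (a := [::]) (b := map (@ge V Ed) L) erefl (allNG_map L))) => h.
    by rewrite /rel2; hs.
  apply: (in_ideal_equiv (in_ideal_cat
     (R1 v (s f) 1 (a := [::]) (b := map (@ge V Ed) (f :: L)) erefl (allNG_map _))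
     (R2 f (-1) (a := [:: gv Ed v]) (b := map (@ge V Ed) L) erefl (allNG_map L)))) => h.
  by rewrite /rel1 /rel2 (negbTE ne); hs.
- apply: (in_ideal_equiv (in_ideal_nil _ _)) => h.
  by hs.
- case: (eqVneq (r e) u) => [<-|ne].
    apply: (in_ideal_equiv (R3 e 1 (a := [::]) (b := [::]) erefl erefl)) => h.
    by rewrite /rel3; hs.
  apply: (in_ideal_equiv (in_ideal_cat
     (R1 (r e) u 1 (a := [:: ge V e]) (b := [::]) erefl erefl)
     (R3 e (-1) (a := [::]) (b := [:: gv Ed u]) erefl erefl))) => h.
  by rewrite /rel1 /rel3 (negbTE ne); hs.
- case: (eqVneq (r e) (s f)) => [Hef|ne].
    apply: (in_ideal_equiv (in_ideal_nil _ _)) => h.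
    by hs.
  apply: (in_ideal_equiv (in_ideal_cat
     (R1 (r e) (s f) 1 (a := [:: ge V e]) (b := map (@ge V Ed) (f :: L)) erefl (allNG_map _))
     (in_ideal_cat
       (R2 f (-1) (a := [:: ge V e; gv Ed (r e)]) (b := map (@ge V Ed) L) erefl (allNG_map L))
       (R3 e (-1) (a := [::]) (b := map (@ge V Ed) (f :: L)) erefl (allNG_map _))))) => h.
  by rewrite /rel1 /rel2 /rel3 (negbTE ne); hs.
- apply: (in_ideal_equiv (in_ideal_nil _ _)) => h.
  by hs.
Qed.


Definition diffw w : fpoly K (gen V Ed) :=
  (1, w) :: (if nfw w is Some m then [:: (-1, word_of m)] else [::]).

Lemma diffw_ideal w : all NG w -> in_ideal NG PR (diffw w).
Proof.
elim: w => [|g w IH] /=.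
  by move=> _; apply: (in_ideal_equiv (in_ideal_nil _ _)) => h; hs.
move=> /andP [Hg Hw]; have Hd := IH Hw.
have Hg1 : all NG [:: g] by rewrite /= Hg.
have Hs := in_ideal_sand 1 (a := [:: g]) (b := [::]) Hd Hg1 erefl.
rewrite /diffw /=; move: Hs; rewrite /diffw.
case: (nfw w) => [m|] Hs /=.
  apply: (in_ideal_equiv (in_ideal_cat Hs (dif_ideal m Hg))) => h.
  rewrite /dif; case: (comb g m) => [m'|]; hs.
by apply: (in_ideal_equiv Hs) => h; hs.
Qed.

Lemma oapp_ind (N : eqType) (o : option N) (z : N) :
  oapp (fun u => (u == z)%:R) (0 : K) o = (o == Some z)%:R.
Proof. by case: o => [u|] //=; rewrite someeq. Qed.

Lemma act_nf (N : eqType) (rho : gen V Ed -> N -> option N) :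
  (forall p, PR p -> forall y (h : N -> K), hsum p (fun w => oapp h 0 (act rho w y)) = 0) ->
  forall w y, all NG w ->
  act rho w y = (if nfw w is Some m then act rho (word_of m) y else None).
Proof.
move=> Hk w y Hw.
have H := rep_ideal Hk (diffw_ideal Hw) y.
have Hz : forall z, hsum (diffw w) (fun w => oapp (fun u => (u == z)%:R) (0 : K) (act rho w y)) = 0.
  by move=> z; apply: H.
have oner : (1 : K) != 0 := oner_neq0 K.
move: Hz; rewrite /diffw.
case: (nfw w) => [m|] Hz.
  case E1: (act rho w y) => [z1|]; case E2: (act rho (word_of m) y) => [z2|].
  - have := Hz z1; rewrite !hsum_cons hsum_nil !oapp_ind E1 E2 !someeq eqxx /=.
    by case: eqP => [->|_] // /eqP; rewrite mulr0 addr0 mulr1 addr0 (negbTE oner).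
  - have := Hz z1; rewrite !hsum_cons hsum_nil !oapp_ind E1 E2 eqxx /=.
    by move/eqP; rewrite mulr0 !addr0 mulr1 (negbTE oner).
  - have := Hz z2; rewrite !hsum_cons hsum_nil !oapp_ind E1 E2 eqxx /=.
    by move/eqP; rewrite mulr0 !add0r addr0 mulr1 oppr_eq0 (negbTE oner).
  - by [].
case E1: (act rho w y) => [z1|] //.
have := Hz z1; rewrite hsum_cons hsum_nil oapp_ind E1 eqxx /=.
by move/eqP; rewrite mulr1 addr0 (negbTE oner).
Qed.

End NF.


Section Main.
Variables (K : fieldType) (V Ed : eqType) (s r : Ed -> V)
    (CI DI : eqType) (cblk : Ed -> CI) (dblk : Ed -> DI)
    (inS : CI -> Prop) (inT : DI -> Prop).
Hypothesis hC : forall e f, cblk e = cblk f -> s e = s f.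
Hypothesis hD : forall e f, dblk e = dblk f -> r e = r f.
Variable f : fpoly K (gen V Ed).
Hypothesis Hng : all (fun x => all (@nonghost V Ed) x.2) f.
Hypothesis Hf : in_ideal predT (@CL_rel K V Ed s r CI DI cblk dblk inS inT) f.

Local Notation CL := (@CL_rel K V Ed s r CI DI cblk dblk inS inT).

Lemma pr_cl p : @path_rel K V Ed s r false p -> CL p.
Proof.
move=> H; left; case: H => [H|[H|[H|[[]|[[] _]]]]] //.
- by left.
- by right; left.
- by right; right; left.
Qed.

Lemma det (N : eqType) (rho : gen V Ed -> N -> option N) b z (F : NF V Ed -> K) :
  (forall p, CL p -> forall y (h : N -> K), hsum p (fun w => oapp h 0 (act rho w y)) = 0) ->
  (forall m, okNF s r m -> (act rho (word_of m) b == Some z)%:R = F m) ->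
  \sum_(x <- f) x.1 * (if nfw s r x.2 is Some m then F m else 0) = 0.
Proof.
move=> Hcl HF.
have Hk : forall p, @path_rel K V Ed s r false p ->
    forall y (h : N -> K), hsum p (fun w => oapp h 0 (act rho w y)) = 0.
  by move=> p /pr_cl; apply: Hcl.
have H := rep_ideal Hcl Hf b (fun u => (u == z)%:R).
rewrite -[RHS]H /hsum; apply: eq_big_seq => x xf.
rewrite (act_nf Hk _ (allP Hng x xf)).
case E: (nfw s r x.2) => [m|] //=.
by rewrite oapp_ind HF // (nfw_ok E).
Qed.

Lemma coef_conv (m0 : NF V Ed) :
  \sum_(x <- f) x.1 * (if nfw s r x.2 is Some m then (m == m0)%:R else 0) =
  \sum_(x <- f | nfw s r x.2 == Some m0) x.1.
Proof.
rewrite [RHS]big_mkcond; apply: eq_bigr => x _.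
case: (nfw s r x.2) => [m|] /=; last by rewrite mulr0.
by rewrite someeq; case: eqP; rewrite ?mulr1 ?mulr0.
Qed.

Definition rho0 (g : gen V Ed) (u : unit) : option unit := None.

Lemma kills0 p : CL p -> forall y (h : unit -> K),
  hsum p (fun w => oapp h 0 (act rho0 w y)) = 0.
Proof.
move=> Hp y h.
case: Hp => [[[v [w ->]] | [[e ->] | [[e ->] | [[_ [e ->]] | [_ [e ->]]]]]] | [HS | HT]].
- by case: ifP => _; rewrite !hsum_cons ?hsum_nil /= !mulr0 ?addr0.
- by rewrite !hsum_cons ?hsum_nil /= !mulr0 ?addr0.
- by rewrite !hsum_cons ?hsum_nil /= !mulr0 ?addr0.
- by rewrite !hsum_cons ?hsum_nil /= !mulr0 ?addr0.
- by rewrite !hsum_cons ?hsum_nil /= !mulr0 ?addr0.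
- case: HS => [X [X' [lX [lX' [e0 [_ ->]]]]]].
  rewrite hsum_cat /hsum big_allpairs_dep big1 ?add0r; last first.
    by move=> e _; rewrite big1 // => g _; rewrite /= mulr0.
  by case: ifP => _; rewrite ?big_cons big_nil /= ?mulr0 ?addr0.
- case: HT => [X [X' [lX [lX' [e0 [_ ->]]]]]].
  rewrite hsum_cat /hsum big_allpairs_dep big1 ?add0r; last first.
    by move=> e _; rewrite big1 // => g _; rewrite /= mulr0.
  by case: ifP => _; rewrite ?big_cons big_nil /= ?mulr0 ?addr0.
Qed.

Lemma coef_none : \sum_(x <- f | nfw s r x.2 == Some (None : NF V Ed)) x.1 = 0.
Proof.
rewrite -coef_conv; apply: (det (rho := rho0) (b := tt) (z := tt) kills0).
by move=> [[u|[e L]]|] _ //=; case: (act rho0 _ tt).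
Qed.


Lemma inl_eq (A B : eqType) (a b : A) : (inl a == inl b :> A + B) = (a == b).
Proof. by apply/eqP/eqP => [[]|->]. Qed.
Lemma inr_eq (A B : eqType) (a b : B) : (inr a == inr b :> A + B) = (a == b).
Proof. by apply/eqP/eqP => [[]|->]. Qed.

Lemma chain_nil v : forall i e, nth None (map Some (@nil Ed)) i = Some e ->
  s e = (if i is j.+1 then oapp r v (nth None (map Some (@nil Ed)) j) else v).
Proof. by move=> i e; rewrite nth_nil. Qed.

Lemma coef_vert v : \sum_(x <- f | nfw s r x.2 == Some (Some (inl v) : NF V Ed)) x.1 = 0.
Proof.
have kills1 := fun p (Hp : CL p) => tree_kills hC hD (chain_nil v) Hp.
have H := det (b := (0%N, [::])) (z := (0%N, [::]))
   (F := fun m => (m == Some (inl v))%:R + (m == None)%:R) kills1.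
have HF : forall m : NF V Ed, okNF s r m ->
   (act (rho s r cblk dblk inS inT v [::]) (word_of m) (0%N, [::]) == Some (0%N, [::]))%:R =
   (m == Some (inl v))%:R + (m == None)%:R :> K.
  move=> [[u|[e L]]|] _ /=.
  - rewrite /rho_v valid_nil /=.
    case: (eqVneq u v) => [->|ne]; first by rewrite !eqxx /= addr0.
    by rewrite someeq inl_eq (negbTE ne) addr0.
  - case E: (_ == _); last by rewrite addr0.
    by move/eqP: E => /(@chain_uniq _ _ s r _ _ cblk dblk inS inT v [::] (e :: L) 0%N).
  - by rewrite add0r.
have := H HF => {H HF}.
rewrite (eq_bigr (fun x => x.1 * (if nfw s r x.2 is Some m then (m == Some (inl v))%:R else 0)
   + x.1 * (if nfw s r x.2 is Some m then (m == None)%:R else 0))); last first.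
  by move=> x _; case: (nfw s r x.2) => [m|] /=; rewrite ?mulrDr ?mulr0 ?addr0.
by rewrite big_split /= !coef_conv coef_none addr0.
Qed.

Lemma chain_path e L : okNF s r (Some (inr (e, L))) -> forall i e0,
  nth None (map Some (e :: L)) i = Some e0 ->
  s e0 = (if i is j.+1 then oapp r (s e) (nth None (map Some (e :: L)) j) else s e).
Proof.
move=> /= Hp [|j] e0 /=; first by case=> ->.
move=> H; have [Hj Hn] := ce_some (es := L) H.
rewrite (_ : Some e :: _ = map Some (e :: L)) // (nth_map e0) /=; last exact: leqW.
have := pathP e0 Hp j Hj; rewrite Hn => /eqP ->.
by [].
Qed.

Lemma coef_path e L : okNF s r (Some (inr (e, L))) ->
  \sum_(x <- f | nfw s r x.2 == Some (Some (inr (e, L)) : NF V Ed)) x.1 = 0.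
Proof.
move=> Hok.
have kills2 := fun p (Hp : CL p) => tree_kills hC hD (chain_path Hok) Hp.
rewrite -coef_conv.
apply: (det (b := (size (e :: L), [::])) (z := (0%N, [::])) kills2).
move=> [[u|[e' L']]|] _.
- rewrite /= /rho_v; case: ifP => _ //=.
- have Hx := chain_exists s r cblk dblk inS inT (s e) (leqnn (size (e :: L))).
  rewrite take_size in Hx.
  case E: (_ == _).
    move/eqP: E => /chain_uniq; rewrite take_size => -[-> ->].
    by rewrite eqxx.
  case: (eqVneq (Some (inr (e', L')) : NF V Ed) (Some (inr (e, L)))) => [Heq|ne].
    by case: Heq E => -> ->; rewrite /word_of Hx eqxx.
  by [].
- by rewrite /=.
Qed.

Lemma coef_all (m : NF V Ed) : \sum_(x <- f | nfw s r x.2 == Some m) x.1 = 0.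
Proof.
case Ok: (okNF s r m); last first.
  by rewrite big1 // => x /eqP E; move: (nfw_ok E); rewrite Ok.
case: m Ok => [[v|[e L]]|] Ok.
- exact: coef_vert.
- exact: coef_path.
- exact: coef_none.
Qed.

Theorem main_local : in_ideal (@nonghost V Ed) (@path_rel K V Ed s r false) f.
Proof.
pose D := flatten [seq fsandwich x.1 [::] (diffw K s r x.2) [::] | x <- f].
have HD : in_ideal (@nonghost V Ed) (@path_rel K V Ed s r false) D.
  apply: in_ideal_flatten => p /mapP [x xf ->].
  by apply: in_ideal_sand => //; apply: diffw_ideal; apply: (allP Hng x xf).
apply: (in_ideal_equiv HD) => h.
have key : \sum_(x <- f) x.1 * (if nfw s r x.2 is Some m then h (word_of m) else 0) = 0.
  have -> : \sum_(x <- f) x.1 * (if nfw s r x.2 is Some m then h (word_of m) else 0) =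
     hsum [seq (x.1, nfw s r x.2) | x <- f]
       (fun o => if o is Some m then h (word_of m) else 0) by rewrite /hsum big_map.
  apply: L1 => -[m|]; last by rewrite eqxx.
  by move=> _; rewrite big_map; apply: coef_all.
rewrite hsum_flatten big_map.
transitivity (\sum_(x <- f) (x.1 * h x.2 - x.1 * (if nfw s r x.2 is Some m then h (word_of m) else 0))).
  apply: eq_bigr => x _; rewrite hsum_sand /diffw.
  case: (nfw s r x.2) => [m|]; rewrite !hsum_cons ?hsum_nil /= !cats0; ring.
by rewrite sumrB key subr0.
Qed.

End Main.

Unset Implicit Arguments.

Theorem mainTheorem4 (K : fieldType) (V Ed : eqType) (s r : Ed -> V)
    (CI DI : eqType) (cblk : Ed -> CI) (dblk : Ed -> DI)
    (inS : CI -> Prop) (inT : DI -> Prop)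
    (hC : forall e f, cblk e = cblk f -> s e = s f)
    (hD : forall e f, dblk e = dblk f -> r e = r f)
    (hCD : forall e f, cblk e = cblk f -> dblk e = dblk f -> e = f)
    (hS : forall X, inS X -> (exists e, cblk e = X) /\ exists l, enum_block cblk X l)
    (hT : forall Y, inT Y -> (exists e, dblk e = Y) /\ exists l, enum_block dblk Y l)
    (f : fpoly K (gen V Ed)) :
  all (fun x => all (@nonghost V Ed) x.2) f ->
  in_ideal predT (@CL_rel K V Ed s r CI DI cblk dblk inS inT) f ->
  in_ideal (@nonghost V Ed) (@path_rel K V Ed s r false) f.
Proof. by move=> Hng Hf; apply: (main_local hC hD Hng Hf). Qed.
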